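(* For all finite multisets of formulas $\Gamma,\Delta$: $\vdash_{\mathsf{GT}^-}\Gamma\Rightarrow\Delta$ if and only if $\vdash_{\mathsf{GT}'^-}\Gamma\Rightarrow\Delta$.
   Context: Fix a countably infinite set $\mathsf{Prop}$ of propositional variables. Classical formulas are generated by $\alpha ::= p \mid \bot \mid \neg\alpha \mid \alpha\wedge\alpha \mid \alpha\vee\alpha$ with $p\in\mathsf{Prop}$. Formulas are generated by $\phi ::= \alpha \mid \phi\wedge\phi \mid \phi\vee\phi \mid \phi\mathbin{\backslash\!\!/}\phi$ where $\alpha$ is classical ($\vee$: split disjunction, $\mathbin{\backslash\!\!/}$: inquisitive disjunction). A sequent is $\Gamma\Rightarrow\Delta$ with $\Gamma,\Delta$ finite multisets of formulas; ''$\Gamma,\Delta$'' is multiset union. Deep-inference notation: for a formula $\chi$ with a designated occurrence of a subformula not in the scope of any negation, $\chi\{\eta\}$ denotes the result of replacing that occurrence by $\eta$. The cut-free calculus $\mathsf{GT}^-$ ($\alpha$ ranges over classical formulas, $\Lambda$ over multisets of classical formulas): axioms $\Gamma,p\Rightarrow p,\Delta$ and $\Gamma,\bot\Rightarrow\Delta$; (L$\neg$) from $\Gamma\Rightarrow\alpha,\Delta$ infer $\Gamma,\neg\alpha\Rightarrow\Delta$; (R$\neg$) from $\Gamma,\alpha\Rightarrow\Delta$ infer $\Gamma\Rightarrow\neg\alpha,\Delta$; (L$\wedge$) from $\Gamma,\phi,\psi\Rightarrow\Delta$ infer $\Gamma,\phi\wedge\psi\Rightarrow\Delta$; (R$\wedge$)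 from $\Gamma\Rightarrow\phi,\Lambda$ and $\Gamma\Rightarrow\psi,\Lambda$ infer $\Gamma\Rightarrow\phi\wedge\psi,\Lambda,\Delta$; (L$\vee$) from $\Gamma,\phi\Rightarrow\Lambda$ and $\Gamma,\psi\Rightarrow\Lambda$ infer $\Gamma,\phi\vee\psi\Rightarrow\Lambda,\Delta$; (R$\vee$) from $\Gamma\Rightarrow\phi,\psi,\Delta$ infer $\Gamma\Rightarrow\phi\vee\psi,\Delta$; (L$\mathbin{\backslash\!\!/}$) from $\Gamma,\chi\{\phi_L\}\Rightarrow\Delta$ and $\Gamma,\chi\{\phi_R\}\Rightarrow\Delta$ infer $\Gamma,\chi\{\phi_L\mathbin{\backslash\!\!/}\phi_R\}\Rightarrow\Delta$; (R$\mathbin{\backslash\!\!/}$) from $\Gamma\Rightarrow\chi\{\phi_i\},\Delta$ ($i\in\{L,R\}$) infer $\Gamma\Rightarrow\chi\{\phi_L\mathbin{\backslash\!\!/}\phi_R\},\Delta$. The calculus $\mathsf{GT}'^-$ has the same axioms and rules as $\mathsf{GT}^-$ except that (R$\wedge$) and (L$\vee$) are replaced by: (L$\vee'$) from $\Gamma_1,\phi\Rightarrow\Delta_1$ and $\Gamma_2,\psi\Rightarrow\Delta_2$ infer $\Gamma_1,\Gamma_2,\phi\vee\psi\Rightarrow\Delta_1,\Delta_2$; (R$\wedge'$) from $\Gamma_1\Rightarrow\phi,\Delta_1$ and $\Gamma_2\Rightarrow\psi,\Delta_2$ infer $\Gamma_1,\Gamma_2\Rightarrow\phi\wedge\psi,\Delta_1,\Delta_2$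 (all formulas and multisets arbitrary); and the structural rules (LC) from $\Gamma,\phi,\phi\Rightarrow\Delta$ infer $\Gamma,\phi\Rightarrow\Delta$ ($\phi$ arbitrary), and (RC) from $\Gamma\Rightarrow\alpha,\alpha,\Delta$ infer $\Gamma\Rightarrow\alpha,\Delta$ ($\alpha$ classical) are added. Neither calculus contains a cut rule. *)

(* Defs.v *)
From Stdlib Require Import List Permutation.
Import ListNotations.

Inductive form : Type :=
| Var  : nat -> form
| Bot  : form
| Neg  : form -> form
| And  : form -> form -> form
| Or   : form -> form -> form
| Idis : form -> form -> form.

Fixpoint classical (f : form) : Prop :=
  match f with
  | Var _ | Bot => True
  | Neg a => classical a
  | And a b | Or a b => classical a /\ classical b
  | Idis _ _ => False
  end.

Fixpoint wf (f : form) : Prop :=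
  match f with
  | Var _ | Bot => True
  | Neg a => classical a
  | And a b | Or a b | Idis a b => wf a /\ wf b
  end.

(* contexts chi{.} with a hole not in the scope of any negation *)
Inductive ctx : Type :=
| Hole   : ctx
| CAndL  : ctx -> form -> ctx
| CAndR  : form -> ctx -> ctx
| COrL   : ctx -> form -> ctx
| COrR   : form -> ctx -> ctx
| CIdisL : ctx -> form -> ctx
| CIdisR : form -> ctx -> ctx.

Fixpoint plug (c : ctx) (e : form) : form :=
  match c with
  | Hole => e
  | CAndL c f => And (plug c e) f
  | CAndR f c => And f (plug c e)
  | COrL c f => Or (plug c e) f
  | COrR f c => Or f (plug c e)
  | CIdisL c f => Idis (plug c e) f
  | CIdisR f c => Idis f (plug c e)
  end.

(* Multisets are represented by lists modulo permutation (rule gt_perm). *)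

Inductive GT : list form -> list form -> Prop :=
| gt_perm : forall G G' D D', Permutation G G' -> Permutation D D' ->
    GT G D -> GT G' D'
| gt_ax : forall G D p, GT (Var p :: G) (Var p :: D)
| gt_bot : forall G D, GT (Bot :: G) D
| gt_LNeg : forall G D a, classical a -> GT G (a :: D) -> GT (Neg a :: G) D
| gt_RNeg : forall G D a, classical a -> GT (a :: G) D -> GT G (Neg a :: D)
| gt_LAnd : forall G D f g, GT (f :: g :: G) D -> GT (And f g :: G) D
| gt_RAnd : forall G L D f g, Forall classical L ->
    GT G (f :: L) -> GT G (g :: L) -> GT G (And f g :: L ++ D)
| gt_LOr : forall G L D f g, Forall classical L ->
    GT (f :: G) L -> GT (g :: G) L -> GT (Or f g :: G) (L ++ D)
| gt_ROr : forall G D f g, GT G (f :: g :: D) -> GT G (Or f g :: D)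
| gt_LIdis : forall G D c f g,
    GT (plug c f :: G) D -> GT (plug c g :: G) D -> GT (plug c (Idis f g) :: G) D
| gt_RIdisL : forall G D c f g,
    GT G (plug c f :: D) -> GT G (plug c (Idis f g) :: D)
| gt_RIdisR : forall G D c f g,
    GT G (plug c g :: D) -> GT G (plug c (Idis f g) :: D).

Inductive GT' : list form -> list form -> Prop :=
| gt'_perm : forall G G' D D', Permutation G G' -> Permutation D D' ->
    GT' G D -> GT' G' D'
| gt'_ax : forall G D p, GT' (Var p :: G) (Var p :: D)
| gt'_bot : forall G D, GT' (Bot :: G) D
| gt'_LNeg : forall G D a, classical a -> GT' G (a :: D) -> GT' (Neg a :: G) D
| gt'_RNeg : forall G D a, classical a -> GT' (a :: G) D -> GT' G (Neg a :: D)
| gt'_LAnd : forall G D f g, GT' (f :: g :: G) D -> GT' (And f g :: G) D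
| gt'_RAnd : forall G1 G2 D1 D2 f g,
    GT' G1 (f :: D1) -> GT' G2 (g :: D2) -> GT' (G1 ++ G2) (And f g :: D1 ++ D2)
| gt'_LOr : forall G1 G2 D1 D2 f g,
    GT' (f :: G1) D1 -> GT' (g :: G2) D2 -> GT' (Or f g :: G1 ++ G2) (D1 ++ D2)
| gt'_ROr : forall G D f g, GT' G (f :: g :: D) -> GT' G (Or f g :: D)
| gt'_LIdis : forall G D c f g,
    GT' (plug c f :: G) D -> GT' (plug c g :: G) D -> GT' (plug c (Idis f g) :: G) D
| gt'_RIdisL : forall G D c f g,
    GT' G (plug c f :: D) -> GT' G (plug c (Idis f g) :: D)
| gt'_RIdisR : forall G D c f g,
    GT' G (plug c g :: D) -> GT' G (plug c (Idis f g) :: D)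
| gt'_LC : forall G D f, GT' (f :: f :: G) D -> GT' (f :: G) D
| gt'_RC : forall G D a, classical a -> GT' G (a :: a :: D) -> GT' G (a :: D).

(* Main.v *)
Require Import Defs.
From Stdlib Require Import List Permutation Classical Lia.
Import ListNotations.


Lemma perm3 {A} (a b c : list A) : Permutation ((a++b)++c) ((a++c)++b).
Proof. rewrite <- !app_assoc. apply Permutation_app_head, Permutation_app_comm. Qed.

Lemma wk' : forall G D, GT' G D -> forall G2 D2, GT' (G ++ G2) (D ++ D2).
Proof.
  induction 1; intros G2' D2'; simpl.
  - eapply gt'_perm; [apply Permutation_app_tail; eassumption
                     | apply Permutation_app_tail; eassumption | auto].
  - apply gt'_ax.
  - apply gt'_bot.
  - apply gt'_LNeg; auto. apply (IHGT' G2' D2').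
  - apply gt'_RNeg; auto. apply (IHGT' G2' D2').
  - apply gt'_LAnd; auto. apply (IHGT' G2' D2').
  - eapply gt'_perm; [ | | apply (gt'_RAnd (G1++G2') G2 (D1++D2') D2 f g);
       [apply (IHGT'1 G2' D2') | assumption]].
    + apply perm3.
    + apply perm_skip, perm3.
  - eapply gt'_perm; [ | | apply (gt'_LOr (G1++G2') G2 (D1++D2') D2 f g);
       [apply (IHGT'1 G2' D2') | assumption]].
    + apply perm_skip, perm3.
    + apply perm3.
  - apply gt'_ROr; auto. apply (IHGT' G2' D2').
  - apply gt'_LIdis; [apply (IHGT'1 G2' D2') | apply (IHGT'2 G2' D2')].
  - apply gt'_RIdisL; apply (IHGT' G2' D2').
  - apply gt'_RIdisR; apply (IHGT' G2' D2').
  - apply gt'_LC; apply (IHGT' G2' D2').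
  - apply gt'_RC; auto; apply (IHGT' G2' D2').
Qed.

Lemma perm_dup {A} (a : A) H G :
  Permutation (H ++ (a :: G) ++ (a :: G)) (a :: a :: H ++ G ++ G).
Proof.
  simpl. eapply Permutation_trans; [symmetry; apply Permutation_middle|].
  apply perm_skip. rewrite !app_assoc. symmetry. apply Permutation_middle.
Qed.

Lemma perm_mv {A} (a : A) H G :
  Permutation (a :: H ++ G) ((H ++ [a]) ++ G).
Proof. rewrite <- app_assoc. simpl. apply Permutation_middle. Qed.

Lemma CL : forall G H D, GT' (H ++ G ++ G) D -> GT' (H ++ G) D.
Proof.
  induction G as [|a G IH]; intros H D Hd; simpl in *; auto.
  replace (H ++ a :: G) with ((H ++ [a]) ++ G) by (rewrite <- app_assoc; reflexivity).
  apply IH.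
  eapply gt'_perm; [apply perm_mv | apply Permutation_refl|].
  apply gt'_LC.
  eapply gt'_perm; [apply perm_dup | apply Permutation_refl| exact Hd].
Qed.

Lemma CR : forall L, Forall classical L -> forall H G, GT' G (H ++ L ++ L) -> GT' G (H ++ L).
Proof.
  induction 1 as [|a L Ha HL IH]; intros H G Hd; simpl in *; auto.
  replace (H ++ a :: L) with ((H ++ [a]) ++ L) by (rewrite <- app_assoc; reflexivity).
  apply IH.
  eapply gt'_perm; [apply Permutation_refl | apply perm_mv |].
  apply gt'_RC; auto.
  eapply gt'_perm; [apply Permutation_refl | apply perm_dup | exact Hd].
Qed.

Lemma GT_GT' : forall G D, GT G D -> GT' G D.
Proof.
  induction 1.
  - eapply gt'_perm; eauto.
  - apply gt'_ax.
  - apply gt'_bot.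
  - apply gt'_LNeg; auto.
  - apply gt'_RNeg; auto.
  - apply gt'_LAnd; auto.
  - cut (GT' (G ++ []) ((And f g :: L) ++ D)); [rewrite app_nil_r; auto|].
    apply wk'. apply (CR L H [And f g] G). auto.
    apply (CL G [] (And f g :: L ++ L)). simpl. apply (gt'_RAnd G G L L); auto.
  - cut (GT' ((Or f g :: G) ++ []) (L ++ D)); [rewrite app_nil_r; auto|].
    apply wk'. apply (CR L H [] (Or f g :: G)). simpl.
    apply (CL G [Or f g] (L ++ L)). apply (gt'_LOr G G L L); auto.
  - apply gt'_ROr; auto.
  - apply gt'_LIdis; auto.
  - apply gt'_RIdisL; auto.
  - apply gt'_RIdisR; auto.
Qed.


Fixpoint res (x : form) : list form :=
  match x with
  | Var p => [Var p]
  | Bot => [Bot]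
  | Neg a => [Neg a]
  | And a b => flat_map (fun ra => map (fun rb => And ra rb) (res b)) (res a)
  | Or a b => flat_map (fun ra => map (fun rb => Or ra rb) (res b)) (res a)
  | Idis f g => res f ++ res g
  end.

Lemma in_res_And a b r : In r (res (And a b)) <-> exists ra rb, r = And ra rb /\ In ra (res a) /\ In rb (res b).
Proof.
  simpl. rewrite in_flat_map. split.
  - intros [ra [Ha Hr]]. apply in_map_iff in Hr as [rb [<- Hb]]. eauto.
  - intros [ra [rb [-> [Ha Hb]]]]. exists ra; split; auto. apply in_map; auto.
Qed.
Lemma in_res_Or a b r : In r (res (Or a b)) <-> exists ra rb, r = Or ra rb /\ In ra (res a) /\ In rb (res b).
Proof.
  simpl. rewrite in_flat_map. split.
  - intros [ra [Ha Hr]]. apply in_map_iff in Hr as [rb [<- Hb]]. eauto.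
  - intros [ra [rb [-> [Ha Hb]]]]. exists ra; split; auto. apply in_map; auto.
Qed.

Lemma res_ne x : exists r, In r (res x).
Proof.
  induction x; simpl; eauto.
  - destruct IHx1 as [a Ha], IHx2 as [b Hb]. exists (And a b). apply in_res_And. eauto.
  - destruct IHx1 as [a Ha], IHx2 as [b Hb]. exists (Or a b). apply in_res_Or. eauto.
  - destruct IHx1 as [a Ha]. exists a. apply in_or_app. auto.
Qed.

Lemma res_classical x : classical x -> res x = [x].
Proof.
  induction x; simpl; intros H; try tauto; auto.
  - destruct H as [H1 H2]. rewrite IHx1, IHx2 by auto. reflexivity.
  - destruct H as [H1 H2]. rewrite IHx1, IHx2 by auto. reflexivity.
Qed.

Lemma wf_res_classical x : wf x -> forall r, In r (res x) -> classical r.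
Proof.
  induction x; simpl; intros H r Hr.
  - destruct Hr as [<-|[]]; simpl; auto.
  - destruct Hr as [<-|[]]; simpl; auto.
  - destruct Hr as [<-|[]]; simpl; auto.
  - apply (in_res_And x1 x2) in Hr as [a [b [-> [Ha Hb]]]]. simpl. destruct H; split; eauto.
  - apply (in_res_Or x1 x2) in Hr as [a [b [-> [Ha Hb]]]]. simpl. destruct H; split; eauto.
  - destruct H. apply in_app_or in Hr as [Hr|Hr]; eauto.
Qed.

Lemma res_plug_mono c X Y : (forall r, In r (res X) -> In r (res Y)) ->
  forall r, In r (res (plug c X)) -> In r (res (plug c Y)).
Proof.
  intros HXY; induction c; simpl plug; intros r Hr; auto.
  - apply in_res_And in Hr as [a [b [-> [Ha Hb]]]]. apply in_res_And. eauto 7.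
  - apply in_res_And in Hr as [a [b [-> [Ha Hb]]]]. apply in_res_And. eauto 7.
  - apply in_res_Or in Hr as [a [b [-> [Ha Hb]]]]. apply in_res_Or. eauto 7.
  - apply in_res_Or in Hr as [a [b [-> [Ha Hb]]]]. apply in_res_Or. eauto 7.
  - simpl in *. apply in_app_or in Hr as [Hr|Hr]; apply in_or_app; auto.
  - simpl in *. apply in_app_or in Hr as [Hr|Hr]; apply in_or_app; auto.
Qed.

Lemma res_plug_split c X A B : (forall r, In r (res X) -> In r (res A) \/ In r (res B)) ->
  forall r, In r (res (plug c X)) -> In r (res (plug c A)) \/ In r (res (plug c B)).
Proof.
  intros HX; induction c; simpl plug; intros r Hr; auto.
  - apply in_res_And in Hr as [a [b [-> [Ha Hb]]]]. destruct (IHc a Ha); [left|right]; apply in_res_And; eauto 7.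
  - apply in_res_And in Hr as [a [b [-> [Ha Hb]]]]. destruct (IHc b Hb); [left|right]; apply in_res_And; eauto 7.
  - apply in_res_Or in Hr as [a [b [-> [Ha Hb]]]]. destruct (IHc a Ha); [left|right]; apply in_res_Or; eauto 7.
  - apply in_res_Or in Hr as [a [b [-> [Ha Hb]]]]. destruct (IHc b Hb); [left|right]; apply in_res_Or; eauto 7.
  - simpl in *. apply in_app_or in Hr as [Hr|Hr].
    + destruct (IHc r Hr); [left|right]; apply in_or_app; auto.
    + left; apply in_or_app; auto.
  - simpl in *. apply in_app_or in Hr as [Hr|Hr].
    + left; apply in_or_app; auto.
    + destruct (IHc r Hr); [left|right]; apply in_or_app; auto.
Qed.

Fixpoint ev (v : nat -> Prop) (x : form) : Prop :=
  match x with
  | Var p => v p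
  | Bot => False
  | Neg a => ~ ev v a
  | And a b => ev v a /\ ev v b
  | Or a b => ev v a \/ ev v b
  | Idis a b => ev v a \/ ev v b
  end.

Definition valid (r s : list form) : Prop :=
  forall v, (forall x, In x r -> ev v x) -> exists y, In y s /\ ev v y.

Definition R (x r : form) : Prop := In r (res x).

Definition Sem (G D : list form) : Prop :=
  forall rho, Forall2 R G rho -> exists sigma, Forall2 R D sigma /\ valid rho sigma.

Lemma ex_res_list D : exists s, Forall2 R D s.
Proof.
  induction D as [|x D [s Hs]]; eauto.
  destruct (res_ne x) as [r Hr]. exists (r :: s); constructor; auto.
Qed.

Lemma valid_perm r r' s s' : Permutation r r' -> Permutation s s' -> valid r s -> valid r' s'.
Proof.
  intros Hr Hs H v Hv. destruct (H v) as [y [Hy Hey]].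
  - intros x Hx. apply Hv. eapply Permutation_in; eauto.
  - exists y; split; auto. eapply Permutation_in; eauto.
Qed.


Lemma R_classical a r : classical a -> R a r -> r = a.
Proof. intros Ha Hr. unfold R in Hr. rewrite res_classical in Hr by auto. destruct Hr as [<-|[]]; auto. Qed.

Lemma sound : forall G D, GT' G D -> Sem G D.
Proof.
  induction 1; intros rho Hrho.
  - destruct (Permutation_Forall2 (Permutation_sym H) Hrho) as [rho' [Hp Hf]].
    destruct (IHGT' rho' Hf) as [s [Hs Hv]].
    destruct (Permutation_Forall2 H0 Hs) as [s' [Hp' Hf']].
    exists s'; split; auto. eapply valid_perm; [symmetry; eauto | eauto | eauto].
  - inversion Hrho as [|? r0 ? rho' Hr0 Hrho']; subst.
    apply R_classical in Hr0; [|exact I]; subst.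
    destruct (ex_res_list D) as [s Hs]. exists (Var p :: s). split.
    + constructor; auto. unfold R; simpl; auto.
    + intros v Hv. exists (Var p); split; [left; auto | apply Hv; left; auto].
  - inversion Hrho as [|? r0 ? rho' Hr0 Hrho']; subst.
    apply R_classical in Hr0; [|exact I]; subst.
    destruct (ex_res_list D) as [s Hs]. exists s. split; auto.
    intros v Hv. destruct (Hv Bot (or_introl eq_refl)).
  - inversion Hrho as [|? r0 ? rho' Hr0 Hrho']; subst.
    apply (R_classical (Neg a)) in Hr0; auto; subst.
    destruct (IHGT' rho' Hrho') as [s [Hs Hv]].
    inversion Hs as [|? r1 ? s' Hr1 Hs']; subst.
    apply R_classical in Hr1; auto; subst.
    exists s'; split; auto. intros v Hev.
    destruct (Hv v) as [y [[<-|Hy] Hey]].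
    + intros x Hx; apply Hev; right; auto.
    + destruct (Hev (Neg a) (or_introl eq_refl)); auto.
    + eauto.
  - destruct (IHGT' (a :: rho)) as [s [Hs Hv]].
    { constructor; auto. unfold R; rewrite res_classical; simpl; auto. }
    exists (Neg a :: s); split.
    + constructor; auto. unfold R; simpl; auto.
    + intros v Hev. destruct (classic (ev v a)) as [Ha|Ha].
      * destruct (Hv v) as [y [Hy Hey]].
        { intros x [<-|Hx]; auto. }
        exists y; split; [right|]; auto.
      * exists (Neg a); split; [left|]; auto.
  - inversion Hrho as [|? r0 ? rho' Hr0 Hrho']; subst.
    apply in_res_And in Hr0 as [ra [rb [-> [Ha Hb]]]].
    destruct (IHGT' (ra :: rb :: rho')) as [s [Hs Hv]].
    { repeat constructor; auto. }
    exists s; split; auto. intros v Hev. apply Hv.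
    destruct (Hev _ (or_introl eq_refl)) as [E1 E2].
    intros x [<-|[<-|Hx]]; auto. apply Hev; right; auto.
  - apply Forall2_app_inv_l in Hrho as [l1 [l2 [H1 [H2 ->]]]].
    destruct (IHGT'1 l1 H1) as [s1 [Hs1 Hv1]].
    destruct (IHGT'2 l2 H2) as [s2 [Hs2 Hv2]].
    inversion Hs1 as [|? r1 ? s1' Hr1 Hs1']; subst.
    inversion Hs2 as [|? r2 ? s2' Hr2 Hs2']; subst.
    exists (And r1 r2 :: s1' ++ s2'); split.
    + constructor. apply in_res_And; eauto. apply Forall2_app; auto.
    + intros v Hev.
      destruct (Hv1 v) as [y1 [Hy1 E1]]. { intros x Hx; apply Hev, in_or_app; auto. }
      destruct (Hv2 v) as [y2 [Hy2 E2]]. { intros x Hx; apply Hev, in_or_app; auto. }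
      destruct Hy1 as [<-|Hy1].
      * destruct Hy2 as [<-|Hy2].
        -- exists (And r1 r2); split; [left|split]; auto.
        -- exists y2; split; auto. right; apply in_or_app; auto.
      * exists y1; split; auto. right; apply in_or_app; auto.
  - inversion Hrho as [|? r0 ? rho' Hr0 Hrho']; subst.
    apply in_res_Or in Hr0 as [ra [rb [-> [Ha Hb]]]].
    apply Forall2_app_inv_l in Hrho' as [l1 [l2 [H1 [H2 ->]]]].
    destruct (IHGT'1 (ra :: l1)) as [s1 [Hs1 Hv1]]. { constructor; auto. }
    destruct (IHGT'2 (rb :: l2)) as [s2 [Hs2 Hv2]]. { constructor; auto. }
    exists (s1 ++ s2); split. { apply Forall2_app; auto. }
    intros v Hev. destruct (Hev _ (or_introl eq_refl)) as [E|E].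
    + destruct (Hv1 v) as [y [Hy Ey]].
      { intros x [<-|Hx]; auto. apply Hev; right; apply in_or_app; auto. }
      exists y; split; auto. apply in_or_app; auto.
    + destruct (Hv2 v) as [y [Hy Ey]].
      { intros x [<-|Hx]; auto. apply Hev; right; apply in_or_app; auto. }
      exists y; split; auto. apply in_or_app; auto.
  - destruct (IHGT' rho Hrho) as [s [Hs Hv]].
    inversion Hs as [|? r1 ? s1 Hr1 Hs1]; subst.
    inversion Hs1 as [|? r2 ? s2 Hr2 Hs2]; subst.
    exists (Or r1 r2 :: s2); split.
    + constructor; auto. apply in_res_Or; eauto.
    + intros v Hev. destruct (Hv v Hev) as [y [[<-|[<-|Hy]] Ey]].
      * exists (Or r1 r2); split; [left|left]; auto.
      * exists (Or r1 r2); split; [left|right]; auto.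
      * exists y; split; [right|]; auto.
  - inversion Hrho as [|? r0 ? rho' Hr0 Hrho']; subst.
    assert (HX : forall r, In r (res (Idis f g)) -> In r (res f) \/ In r (res g)).
    { intros r Hr; simpl in Hr; apply in_app_or; auto. }
    destruct (res_plug_split c (Idis f g) f g HX r0 Hr0) as [Hr|Hr].
    + apply IHGT'1; constructor; auto.
    + apply IHGT'2; constructor; auto.
  - destruct (IHGT' rho Hrho) as [s [Hs Hv]].
    inversion Hs as [|? r1 ? s1 Hr1 Hs1]; subst.
    exists (r1 :: s1); split; auto. constructor; auto.
    eapply res_plug_mono; [|exact Hr1]. intros r Hr; simpl; apply in_or_app; auto.
  - destruct (IHGT' rho Hrho) as [s [Hs Hv]].
    inversion Hs as [|? r1 ? s1 Hr1 Hs1]; subst.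
    exists (r1 :: s1); split; auto. constructor; auto.
    eapply res_plug_mono; [|exact Hr1]. intros r Hr; simpl; apply in_or_app; auto.
  - inversion Hrho as [|? r0 ? rho' Hr0 Hrho']; subst.
    destruct (IHGT' (r0 :: r0 :: rho')) as [s [Hs Hv]]. { repeat constructor; auto. }
    exists s; split; auto. intros v Hev. apply Hv.
    intros x [<-|[<-|Hx]]; apply Hev; simpl; auto.
  - destruct (IHGT' rho Hrho) as [s [Hs Hv]].
    inversion Hs as [|? r1 ? s1 Hr1 Hs1]; subst.
    inversion Hs1 as [|? r2 ? s2 Hr2 Hs2]; subst.
    apply R_classical in Hr1; auto. apply R_classical in Hr2; auto. subst.
    exists (a :: s2); split. { constructor; auto. unfold R; rewrite res_classical; simpl; auto. }
    intros v Hev. destruct (Hv v Hev) as [y [Hy Ey]]. destruct Hy as [Hy|[Hy|Hy]]; subst; exists y; simpl; auto.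
Qed.


Fixpoint ccomp (c d : ctx) : ctx :=
  match c with
  | Hole => d
  | CAndL c f => CAndL (ccomp c d) f
  | CAndR f c => CAndR f (ccomp c d)
  | COrL c f => COrL (ccomp c d) f
  | COrR f c => COrR f (ccomp c d)
  | CIdisL c f => CIdisL (ccomp c d) f
  | CIdisR f c => CIdisR f (ccomp c d)
  end.

Lemma plug_ccomp c d e : plug (ccomp c d) e = plug c (plug d e).
Proof. induction c; simpl; congruence. Qed.

Lemma L1 : forall x c G D, (forall r, In r (res x) -> GT (plug c r :: G) D) -> GT (plug c x :: G) D.
Proof.
  induction x; intros c G D H.
  - apply H; simpl; auto.
  - apply H; simpl; auto.
  - apply H; simpl; auto.
  - change (And x1 x2) with (plug (CAndL Hole x2) x1). rewrite <- plug_ccomp.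
    apply IHx1. intros ra Ha. rewrite plug_ccomp. simpl.
    change (And ra x2) with (plug (CAndR ra Hole) x2). rewrite <- plug_ccomp.
    apply IHx2. intros rb Hb. rewrite plug_ccomp. simpl.
    apply H. apply in_res_And. eauto.
  - change (Or x1 x2) with (plug (COrL Hole x2) x1). rewrite <- plug_ccomp.
    apply IHx1. intros ra Ha. rewrite plug_ccomp. simpl.
    change (Or ra x2) with (plug (COrR ra Hole) x2). rewrite <- plug_ccomp.
    apply IHx2. intros rb Hb. rewrite plug_ccomp. simpl.
    apply H. apply in_res_Or. eauto.
  - apply gt_LIdis; [apply IHx1 | apply IHx2]; intros r Hr; apply H; simpl; apply in_or_app; auto.
Qed.

Lemma R1 : forall x c G D r, In r (res x) -> GT G (plug c r :: D) -> GT G (plug c x :: D).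
Proof.
  induction x; intros c G D r Hr H.
  - destruct Hr as [<-|[]]; auto.
  - destruct Hr as [<-|[]]; auto.
  - destruct Hr as [<-|[]]; auto.
  - apply in_res_And in Hr as [ra [rb [-> [Ha Hb]]]].
    change (And x1 x2) with (plug (CAndL Hole x2) x1). rewrite <- plug_ccomp.
    apply IHx1 with ra; auto. rewrite plug_ccomp. simpl.
    change (And ra x2) with (plug (CAndR ra Hole) x2). rewrite <- plug_ccomp.
    apply IHx2 with rb; auto. rewrite plug_ccomp. simpl. auto.
  - apply in_res_Or in Hr as [ra [rb [-> [Ha Hb]]]].
    change (Or x1 x2) with (plug (COrL Hole x2) x1). rewrite <- plug_ccomp.
    apply IHx1 with ra; auto. rewrite plug_ccomp. simpl.
    change (Or ra x2) with (plug (COrR ra Hole) x2). rewrite <- plug_ccomp.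
    apply IHx2 with rb; auto. rewrite plug_ccomp. simpl. auto.
  - simpl in Hr. apply in_app_or in Hr as [Hr|Hr].
    + apply gt_RIdisL. eauto.
    + apply gt_RIdisR. eauto.
Qed.

Lemma L2 : forall G H D, (forall rho, Forall2 R G rho -> GT (rho ++ H) D) -> GT (G ++ H) D.
Proof.
  induction G as [|a G IH]; intros H D Hyp.
  - apply (Hyp []); constructor.
  - simpl. apply (L1 a Hole). intros r Hr. simpl plug.
    eapply gt_perm; [symmetry; apply Permutation_middle | apply Permutation_refl |].
    apply IH. intros rho Hrho.
    eapply gt_perm; [apply Permutation_middle | apply Permutation_refl |].
    apply (Hyp (r :: rho)); constructor; auto.
Qed.

Lemma R2 : forall D s, Forall2 R D s -> forall G H, GT G (s ++ H) -> GT G (D ++ H).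
Proof.
  induction 1 as [|x y l l' Hxy Hl IH]; intros G H0 Hd; simpl in *; auto.
  apply (R1 x Hole G (l ++ H0) y); auto. simpl.
  eapply gt_perm; [apply Permutation_refl | symmetry; apply Permutation_middle |].
  apply IH.
  eapply gt_perm; [apply Permutation_refl | apply Permutation_middle | exact Hd].
Qed.

Definition atomic (x : form) : Prop :=
  match x with Var _ | Bot => True | _ => False end.

Lemma base : forall A B, Forall atomic A -> Forall atomic B -> valid A B -> GT A B.
Proof.
  intros A B HA HB Hv.
  destruct (classic (In Bot A)) as [Hb|Hb].
  - apply in_split in Hb as [A1 [A2 ->]].
    eapply gt_perm; [apply Permutation_middle | apply Permutation_refl | apply gt_bot].
  - destruct (Hv (fun p => In (Var p) A)) as [y [Hy Ey]].
    + intros x Hx. rewrite Forall_forall in HA. specialize (HA x Hx).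
      destruct x; simpl in *; try tauto.
    + rewrite Forall_forall in HB. specialize (HB y Hy).
      destruct y; simpl in *; try tauto.
      apply in_split in Ey as [A1 [A2 ->]].
      apply in_split in Hy as [B1 [B2 ->]].
      eapply gt_perm; [apply Permutation_middle | apply Permutation_middle | apply gt_ax].
Qed.

Fixpoint fsize (x : form) : nat :=
  match x with
  | Var _ | Bot => 1
  | Neg a => 1 + fsize a
  | And a b | Or a b | Idis a b => 1 + (fsize a + fsize b)
  end.
Fixpoint lsz (l : list form) : nat :=
  match l with [] => 0 | x :: l => fsize x + lsz l end.
Lemma fsize_pos x : 0 < fsize x. Proof. destruct x; simpl; lia. Qed.

Lemma atomic_classical A : Forall atomic A -> Forall classical A.
Proof. intros H. eapply Forall_impl; [|exact H]. intros [] Ha; simpl in *; tauto. Qed.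

Lemma in_app_split {A} (x : A) l1 l2 : In x (l1 ++ l2) -> In x l1 \/ In x l2.
Proof. apply in_app_or. Qed.

Ltac vin := repeat (simpl; first [ apply in_or_app | idtac ]).

Lemma CC : forall n G D A B, lsz G + lsz D <= n -> Forall classical G -> Forall classical D ->
  Forall atomic A -> Forall atomic B -> valid (G ++ A) (D ++ B) -> GT (G ++ A) (D ++ B).
Proof.
  induction n; intros G D A B Hn HG HD HA HB Hv.
  - destruct G as [|x G]; [|simpl in Hn; pose proof (fsize_pos x); lia].
    destruct D as [|y D]; [|simpl in Hn; pose proof (fsize_pos y); lia].
    apply base; auto.
  - destruct G as [|x G].
    + destruct D as [|y D]. { apply base; auto. }
      simpl in Hn. inversion HD as [|? ? Hy HD']; subst.
      destruct y; simpl in *.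
      * eapply gt_perm; [apply Permutation_refl | symmetry; apply Permutation_middle |].
        apply (IHn [] D A (Var n0 :: B)); simpl; auto; try lia.
        eapply valid_perm; [apply Permutation_refl | apply Permutation_middle | exact Hv].
      * eapply gt_perm; [apply Permutation_refl | symmetry; apply Permutation_middle |].
        apply (IHn [] D A (Bot :: B)); simpl; auto; try lia.
        eapply valid_perm; [apply Permutation_refl | apply Permutation_middle | exact Hv].
      * apply gt_RNeg; auto. apply (IHn [y] D A B); simpl; auto; try lia.
        intros v Hev. destruct (classic (ev v y)) as [Ey|Ey].
        -- destruct (Hv v) as [z [Hz Ez]]. { intros x Hx; apply Hev; right; auto. }
           destruct Hz as [<-|Hz]; [simpl in Ez; tauto| exists z; simpl; auto].
        -- exfalso. apply Ey, Hev. left; auto.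
      * destruct Hy as [Hy1 Hy2].
        cut (GT A (And y1 y2 :: (D ++ B) ++ [])); [rewrite app_nil_r; auto|].
        apply gt_RAnd.
        { apply Forall_app; split; auto. apply atomic_classical; auto. }
        -- apply (IHn [] (y1 :: D) A B); simpl; auto; try lia.
           intros v Hev. destruct (Hv v Hev) as [z [[<-|Hz] Ez]]; [exists y1; simpl in Ez; simpl; tauto | exists z; simpl; auto].
        -- apply (IHn [] (y2 :: D) A B); simpl; auto; try lia.
           intros v Hev. destruct (Hv v Hev) as [z [[<-|Hz] Ez]]; [exists y2; simpl in Ez; simpl; tauto | exists z; simpl; auto].
      * destruct Hy as [Hy1 Hy2]. apply gt_ROr.
        apply (IHn [] (y1 :: y2 :: D) A B); simpl; auto; try lia.
        intros v Hev. destruct (Hv v Hev) as [z [[<-|Hz] Ez]]; [simpl in Ez | exists z; simpl; auto].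
        destruct Ez; [exists y1 | exists y2]; simpl; tauto.
      * tauto.
    + simpl in Hn. inversion HG as [|? ? Hx HG']; subst.
      destruct x; simpl in *.
      * eapply gt_perm; [symmetry; apply Permutation_middle | apply Permutation_refl |].
        apply (IHn G D (Var n0 :: A) B); simpl; auto; try lia.
        eapply valid_perm; [apply Permutation_middle | apply Permutation_refl | exact Hv].
      * apply gt_bot.
      * apply gt_LNeg; auto. apply (IHn G (x :: D) A B); simpl; auto; try lia.
        intros v Hev. destruct (classic (ev v x)) as [Ex|Ex].
        -- exists x; simpl; auto.
        -- destruct (Hv v) as [z [Hz Ez]].
           { intros y [<-|Hy]; [simpl; auto | apply Hev; auto]. }
           exists z; simpl; auto.
      * destruct Hx as [Hx1 Hx2]. apply gt_LAnd.
        apply (IHn (x1 :: x2 :: G) D A B); simpl; auto; try lia.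
        intros v Hev. apply Hv. intros y [<-|Hy]; [split; apply Hev; simpl; auto | apply Hev; simpl; auto].
      * destruct Hx as [Hx1 Hx2].
        cut (GT (Or x1 x2 :: G ++ A) ((D ++ B) ++ [])); [rewrite app_nil_r; auto|].
        apply gt_LOr.
        { apply Forall_app; split; auto. apply atomic_classical; auto. }
        -- apply (IHn (x1 :: G) D A B); simpl; auto; try lia.
           intros v Hev. apply Hv. intros y [<-|Hy]; [left; apply Hev; simpl; auto | apply Hev; simpl; auto].
        -- apply (IHn (x2 :: G) D A B); simpl; auto; try lia.
           intros v Hev. apply Hv. intros y [<-|Hy]; [right; apply Hev; simpl; auto | apply Hev; simpl; auto].
      * tauto.
Qed.


Lemma Forall2_classical G rho : Forall wf G -> Forall2 R G rho -> Forall classical rho.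
Proof.
  intros HG H. induction H; constructor; inversion HG; subst; auto.
  eapply wf_res_classical; eauto.
Qed.

Lemma complete G D : Forall wf G -> Forall wf D -> Sem G D -> GT G D.
Proof.
  intros HG HD HS. rewrite <- (app_nil_r G). apply L2. intros rho Hrho.
  destruct (HS rho Hrho) as [s [Hs Hv]].
  rewrite <- (app_nil_r D). apply (R2 D s Hs).
  apply (CC (lsz rho + lsz s) rho s [] []).
  - apply le_n.
  - exact (Forall2_classical G rho HG Hrho).
  - exact (Forall2_classical D s HD Hs).
  - constructor.
  - constructor.
  - rewrite !app_nil_r; auto.
Qed.

Theorem proposition9p2 (G D : list form) :
  Forall wf G -> Forall wf D -> (GT G D <-> GT' G D).
Proof.
  intros HG HD. split.
  - apply GT_GT'.
  - intros H. apply complete; auto. apply sound; auto.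
Qed.
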